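(* Let $(E\to M,\rho,\langle\cdot,\cdot\rangle,\circ)$ be a Courant algebroid and $(\mathbf I,\mathbf J,\mathbf K)$ an almost hypercomplex structure on $E$ with $N_{\mathbf I,\mathbf J}=0$. Then the hypercomplex connection $$\nabla_XY=-\tfrac12\mathbf K\big(\mathbf JY\circ\mathbf IX-\mathbf J(Y\circ\mathbf IX)-\mathbf I(\mathbf JY\circ X)+\mathbf J\mathbf I(Y\circ X)\big)$$ satisfies $\nabla\mathbf I=\nabla\mathbf J=\nabla\mathbf K=0$ and, for all $X,Y\in\Gamma(E)$, $$T(X,Y)=\mathbf ID\langle X,\mathbf IY\rangle+\mathbf JD\langle X,\mathbf JY\rangle+\mathbf KD\langle X,\mathbf KY\rangle.$$
   Context: A Courant algebroid $(E\to M,\rho,\langle\cdot,\cdot\rangle,\circ)$ consists of a real vector bundle $E\to M$ over a smooth manifold, a nondegenerate symmetric fiberwise bilinear pairing $\langle\cdot,\cdot\rangle$ on $E$, a vector bundle map $\rho:E\to TM$ (the anchor), and an $\mathbb R$-bilinear operation $\circ$ on $\Gamma(E)$ (the Dorfman bracket) such that for all $f\in C^\infty(M)$, $x,y,z\in\Gamma(E)$: $x\circ(y\circ z)=(x\circ y)\circ z+y\circ(x\circ z)$; $\rho(x\circ y)=[\rho(x),\rho(y)]$; $x\circ(fy)=(\rho(x)f)y+f(x\circ y)$; $x\circ y+y\circ x=2D\langle x,y\rangle$; $(Df)\circ x=0$; $\rho(x)\langle y,z\rangle=\langle x\circ y,z\rangle+\langle y,x\circ z\rangle$. Here $D:C^\infty(M)\to\Gamma(E)$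 is the $\mathbb R$-linear map defined by $\langle Df,x\rangle=\tfrac12\rho(x)f$. The Courant bracket is $[\![x,y]\!]=\tfrac12(x\circ y-y\circ x)$. For vector bundle endomorphisms $F,G$ of $E$ (over $\mathrm{id}_M$), the Nijenhuis concomitant is the tensor $N_{F,G}:E\otimes E\to E$ given by $N_{F,G}(X,Y)=FX\circ GY-F(X\circ GY)-G(FX\circ Y)+FG(X\circ Y)+GX\circ FY-G(X\circ FY)-F(GX\circ Y)+GF(X\circ Y)$. An almost hypercomplex structure on $E$ is a triple $(\mathbf I,\mathbf J,\mathbf K)$ of vector bundle endomorphisms of $E$ over $\mathrm{id}_M$, each orthogonal for $\langle\cdot,\cdot\rangle$, with $\mathbf I^2=\mathbf J^2=\mathbf K^2=\mathbf I\mathbf J\mathbf K=-1$. Given an almost hypercomplex structure, for $f\in C^\infty(M)$ and $X,Y\in\Gamma(E)$ set $\Delta_f(X,Y)=\langle X,Y\rangle Df+\langle\mathbf IX,Y\rangle\mathbf I Df+\langle\mathbf JX,Y\rangle\mathbf JDf+\langle\mathbf KX,Y\rangle\mathbf KDf$. A hypercomplex connection is an $\mathbb R$-bilinear map $\Gamma(E)\times\Gamma(E)\to\Gamma(E)$, $(X,Y)\mapsto\nabla_XY$, with $\nabla_{fX}Y=f\nabla_XY$ and $\nabla_X(fY)=(\rho(X)f)Y+f\nabla_XY-\Delta_f(X,Y)$. Its torsion is $T(X,Y)=\nabla_XY-\nabla_YX-[\![X,Y]\!]$. For an endomorphism $P$ of $E$, $(\nabla_XP)Y:=\nabla_X(PY)-P(\nabla_XY)$,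 and $\nabla P=0$ means this vanishes for all $X,Y$. *)

(* Defs.v *)
(* Algebraic (Lie--Rinehart style) model of a Courant algebroid:
   R      : the real scalars (a real field),
   A      : the commutative R-algebra C^oo(M),
   V      : the A-module Gamma(E) of sections. *)
From HB Require Import structures.
From mathcomp Require Import all_boot all_order all_algebra.
Set Implicit Arguments. Unset Strict Implicit. Unset Printing Implicit Defensive.
Import Order.TTheory GRing.Theory Num.Theory.
Local Open Scope ring_scope.

Definition vector_field (R : realFieldType) (A : comAlgType R) (v : A -> A) : Prop :=
  [/\ (forall f g : A, v (f + g) = v f + v g),
      (forall (k : R) (f : A), v (k *: f) = k *: v f) &
      (forall f g : A, v (f * g) = v f * g + f * v g)].

Definition rscale (R : realFieldType) (A : comAlgType R) (V : lmodType A)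
  (k : R) (v : V) : V := ((k%:A : A) *: v).

Record courant_algebroid (R : realFieldType) (A : comAlgType R) (V : lmodType A)
  (pair : V -> V -> A) (rho : V -> A -> A) (dorf : V -> V -> V) (D : A -> V) : Prop :=
{ pair_sym : forall x y, pair x y = pair y x;
  pair_addl : forall x y z, pair (x + y) z = pair x z + pair y z;
  pair_scalel : forall (f : A) x y, pair (f *: x) y = f * pair x y;
  pair_nondeg : forall x, (forall y, pair x y = 0) -> x = 0;
  anchor_add : forall x y f, rho (x + y) f = rho x f + rho y f;
  anchor_scale : forall (g : A) x f, rho (g *: x) f = g * rho x f;
  anchor_vf : forall x, vector_field (rho x);
  dorf_addl : forall x y z, dorf (x + y) z = dorf x z + dorf y z;
  dorf_addr : forall x y z, dorf x (y + z) = dorf x y + dorf x z;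
  dorf_scalel : forall (k : R) x y, dorf (rscale k x) y = rscale k (dorf x y);
  dorf_scaler : forall (k : R) x y, dorf x (rscale k y) = rscale k (dorf x y);
  dorf_jacobi : forall x y z,
      dorf x (dorf y z) = dorf (dorf x y) z + dorf y (dorf x z);
  dorf_anchor : forall x y f,
      rho (dorf x y) f = rho x (rho y f) - rho y (rho x f);
  dorf_leibniz : forall x y (f : A), dorf x (f *: y) = rho x f *: y + f *: dorf x y;
  dorf_sym : forall x y, dorf x y + dorf y x = (2%:R : A) *: D (pair x y);
  dorf_D : forall f x, dorf (D f) x = 0;
  dorf_invariant : forall x y z,
      rho x (pair y z) = pair (dorf x y) z + pair y (dorf x z);
  D_def : forall f x, pair (D f) x = (2^-1 : R) *: rho x f }.

(* vector bundle endomorphism over id_M = A-linear map of sections *)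
Definition bundle_endo (A : pzRingType) (V : lmodType A) (P : V -> V) : Prop :=
  (forall x y, P (x + y) = P x + P y) /\ (forall (f : A) x, P (f *: x) = f *: P x).

Definition orthogonal_endo (A : pzRingType) (V : lmodType A)
  (pair : V -> V -> A) (P : V -> V) : Prop :=
  forall x y, pair (P x) (P y) = pair x y.

Record almost_hypercomplex (A : pzRingType) (V : lmodType A)
  (pair : V -> V -> A) (I J K : V -> V) : Prop :=
{ ahc_endoI : bundle_endo I; ahc_endoJ : bundle_endo J; ahc_endoK : bundle_endo K;
  ahc_orthI : orthogonal_endo pair I; ahc_orthJ : orthogonal_endo pair J;
  ahc_orthK : orthogonal_endo pair K;
  ahc_I2 : forall x, I (I x) = - x;
  ahc_J2 : forall x, J (J x) = - x;
  ahc_K2 : forall x, K (K x) = - x;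
  ahc_IJK : forall x, I (J (K x)) = - x }.

Definition nijenhuis (A : pzRingType) (V : lmodType A) (dorf : V -> V -> V)
  (F G : V -> V) (X Y : V) : V :=
  dorf (F X) (G Y) - F (dorf X (G Y)) - G (dorf (F X) Y) + F (G (dorf X Y))
  + dorf (G X) (F Y) - G (dorf X (F Y)) - F (dorf (G X) Y) + G (F (dorf X Y)).

Definition hc_Delta (A : pzRingType) (V : lmodType A) (pair : V -> V -> A)
  (D : A -> V) (I J K : V -> V) (f : A) (X Y : V) : V :=
  pair X Y *: D f + pair (I X) Y *: I (D f) + pair (J X) Y *: J (D f)
  + pair (K X) Y *: K (D f).

Definition hypercomplex_connection (A : pzRingType) (V : lmodType A)
  (pair : V -> V -> A) (rho : V -> A -> A) (D : A -> V) (I J K : V -> V)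
  (nabla : V -> V -> V) : Prop :=
  [/\ (forall X X' Y, nabla (X + X') Y = nabla X Y + nabla X' Y),
      (forall X Y Y', nabla X (Y + Y') = nabla X Y + nabla X Y'),
      (forall (f : A) X Y, nabla (f *: X) Y = f *: nabla X Y) &
      (forall (f : A) X Y,
          nabla X (f *: Y) = rho X f *: Y + f *: nabla X Y - hc_Delta pair D I J K f X Y)].

Definition courant_bracket (R : realFieldType) (A : comAlgType R) (V : lmodType A)
  (dorf : V -> V -> V) (x y : V) : V :=
  rscale (2^-1 : R) (dorf x y - dorf y x).

Definition torsion (R : realFieldType) (A : comAlgType R) (V : lmodType A)
  (dorf : V -> V -> V) (nabla : V -> V -> V) (X Y : V) : V :=
  nabla X Y - nabla Y X - courant_bracket dorf X Y.

Definition cov_deriv (A : pzRingType) (V : lmodType A)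
  (nabla : V -> V -> V) (P : V -> V) (X Y : V) : V :=
  nabla X (P Y) - P (nabla X Y).

Definition nablaIJ (R : realFieldType) (A : comAlgType R) (V : lmodType A)
  (dorf : V -> V -> V) (I J K : V -> V) (X Y : V) : V :=
  rscale (- (2^-1 : R))
    (K (dorf (J Y) (I X) - J (dorf Y (I X)) - I (dorf (J Y) X) + J (I (dorf Y X)))).

(* Main.v *)
Require Import Defs.
From HB Require Import structures.
From mathcomp Require Import all_boot all_order all_algebra.
Set Implicit Arguments. Unset Strict Implicit. Unset Printing Implicit Defensive.
Import Order.TTheory GRing.Theory Num.Theory.
Local Open Scope ring_scope.

Inductive zex := ZAtom of nat | ZAdd of zex & zex | ZOpp of zex | ZZero.

Fixpoint zeval (V : zmodType) (env : seq V) (e : zex) : V :=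
  match e with
  | ZAtom i => nth 0 env i
  | ZAdd a b => zeval env a + zeval env b
  | ZOpp a => - zeval env a
  | ZZero => 0
  end.

Fixpoint zcoef (e : zex) (i : nat) : int :=
  match e with
  | ZAtom j => if i == j then 1 else 0
  | ZAdd a b => zcoef a i + zcoef b i
  | ZOpp a => - zcoef a i
  | ZZero => 0
  end.

Lemma zeval_coef (V : zmodType) (env : seq V) e :
  zeval env e = \sum_(i < size env) (nth 0 env i) *~ zcoef e i.
Proof.
elim: e => [j|a IHa b IHb|a IHa|] /=.
- case: (ltnP j (size env)) => hj.
  + rewrite (bigD1 (Ordinal hj)) //= eqxx mulr1z big1 ?addr0 //.
    move=> i /negbTE; rewrite -val_eqE /= => ->; exact: mulr0z.
  + rewrite nth_default // big1 // => i _; case: eqP => [eij|]; last by rewrite mulr0z.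
    by move: (ltn_ord i); rewrite eij ltnNge hj.
- by rewrite IHa IHb -big_split /=; apply: eq_bigr => i _; rewrite mulrzDr_tmp.
- by rewrite IHa -sumrN; apply: eq_bigr => i _; rewrite mulrNz.
- by rewrite big1 // => i _; rewrite mulr0z.
Qed.

Lemma zcheck (V : zmodType) (env : seq V) e1 e2 :
  all (fun i => zcoef e1 i == zcoef e2 i) (iota 0 (size env)) ->
  zeval env e1 = zeval env e2.
Proof.
move/allP=> H; rewrite !zeval_coef; apply: eq_bigr => i _.
by rewrite (eqP (H i _)) // mem_iota /=.
Qed.

Ltac zfind t env k :=
  lazymatch env with
  | ?u :: ?r => match constr:(tt) with
                | _ => let _ := match constr:(tt) with _ => unify t u end in constr:(k)
                | _ => zfind t r (S k)
                end
  end.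

Ltac zreify t env :=
  lazymatch t with
  | ?a + ?b =>
      let p := zreify a env in
      lazymatch p with (?ea, ?env1) =>
        let q := zreify b env1 in
        lazymatch q with (?eb, ?env2) => constr:((ZAdd ea eb, env2)) end end
  | - ?a =>
      let p := zreify a env in
      lazymatch p with (?ea, ?env1) => constr:((ZOpp ea, env1)) end
  | 0 => constr:((ZZero, env))
  | _ =>
      let r := match constr:(tt) with
               | _ => let k := zfind t env 0%N in constr:((ZAtom k, env))
               | _ => let n := eval compute in (size env) in
                      let env' := eval cbv beta iota delta [cat] in (env ++ [:: t]) in
                      constr:((ZAtom n, env'))
               end in r
  end.

Ltac zmod_eq :=
  lazymatch goal with
  |- @eq ?T ?l ?r =>
    let p := zreify l (@nil T) in
    lazymatch p with (?el, ?env1) =>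
      let q := zreify r env1 in
      lazymatch q with (?er, ?env2) =>
        let env3 := env2 in
        change (zeval env3 el = zeval env3 er);
        apply: zcheck; vm_compute; reflexivity
      end end
  end.


Section Pf.
Variables (R : realFieldType) (A : comAlgType R) (V : lmodType A)
  (pair : V -> V -> A) (rho : V -> A -> A) (dorf : V -> V -> V) (D : A -> V)
  (I J K : V -> V).
Hypothesis HC : courant_algebroid pair rho dorf D.
Hypothesis Hhc : almost_hypercomplex pair I J K.

Lemma endoD (P : V -> V) : bundle_endo P -> forall x y, P (x + y) = P x + P y.
Proof. by case. Qed.
Lemma endoZ (P : V -> V) : bundle_endo P -> forall (f : A) x, P (f *: x) = f *: P x.
Proof. by case. Qed.
Lemma endoN (P : V -> V) : bundle_endo P -> forall x, P (- x) = - P x.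
Proof. by move=> HP x; rewrite -scaleN1r (endoZ HP) scaleN1r. Qed.
Lemma endoB (P : V -> V) : bundle_endo P -> forall x y, P (x - y) = P x - P y.
Proof. by move=> HP x y; rewrite (endoD HP) (endoN HP). Qed.
Lemma endoR (P : V -> V) : bundle_endo P -> forall k x, P (rscale k x) = rscale k (P x).
Proof. by move=> HP k x; rewrite /rscale (endoZ HP). Qed.

Let HI := ahc_endoI Hhc. Let I2 := ahc_I2 Hhc. Let J2 := ahc_J2 Hhc. Let K2 := ahc_K2 Hhc. Let IJK := ahc_IJK Hhc. Let HJ := ahc_endoJ Hhc. Let HK := ahc_endoK Hhc.

Lemma IJ x : I (J x) = K x.
Proof.
have := IJK (K x). by rewrite K2 (endoN HJ) (endoN HI) => /oppr_inj.
Qed.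
Lemma JK x : J (K x) = I x.
Proof. have := congr1 I (IJK x). by rewrite I2 (endoN HI) => /oppr_inj. Qed.
Lemma JI x : J (I x) = - K x.
Proof. by rewrite -JK J2. Qed.
Lemma KJ x : K (J x) = - I x.
Proof. by rewrite -IJ J2 (endoN HI). Qed.
Lemma IK x : I (K x) = - J x.
Proof. by rewrite -IJ I2. Qed.
Lemma KI x : K (I x) = J x.
Proof. by rewrite -IJ JI (endoN HI) IK opprK. Qed.

Lemma rsD k (u v : V) : rscale k (u + v) = rscale k u + rscale k v.
Proof. by rewrite /rscale scalerDr. Qed.
Lemma rsN k (u : V) : rscale k (- u) = - rscale k u.
Proof. by rewrite /rscale scalerN. Qed.
Lemma rsB k (u v : V) : rscale k (u - v) = rscale k u - rscale k v.
Proof. by rewrite rsD rsN. Qed.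
Lemma rsZ k (f : A) (u : V) : rscale k (f *: u) = f *: rscale k u.
Proof. by rewrite /rscale !scalerA mulrC. Qed.
Lemma two_neq0 : (2%:R : R) != 0.
Proof. by rewrite pnatr_eq0. Qed.
Lemma halfn2 : (2^-1 : R) *+ 2 = 1.
Proof. by rewrite -(mulr_natr (2^-1 : R) 2) mulVf // two_neq0. Qed.
Lemma half2 (u : V) : rscale (2^-1) (u + u) = u.
Proof.
by rewrite /rscale -mulr2n -scalerMnr scalerMnl scalerMnl halfn2 !scale1r.
Qed.
Lemma mhalf2 (u : V) : rscale (- 2^-1) (u + u) = - u.
Proof. by have := half2 u; rewrite /rscale !scaleNr => ->. Qed.
Lemma scale2 (v : V) : (2%:R : A) *: v = v + v.
Proof. by rewrite scaler_nat mulr2n. Qed.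

Let psym := pair_sym HC.
Lemma pairNl x y : pair (- x) y = - pair x y.
Proof. by rewrite -scaleN1r (pair_scalel HC) mulN1r. Qed.
Lemma pairNr x y : pair x (- y) = - pair x y.
Proof. by rewrite psym pairNl psym. Qed.
Lemma pairDr x y z : pair x (y + z) = pair x y + pair x z.
Proof. by rewrite psym (pair_addl HC) !(psym x). Qed.

Lemma pair_ext x x' : (forall y, pair x y = pair x' y) -> x = x'.
Proof.
move=> H; apply/eqP; rewrite -subr_eq0; apply/eqP; apply: (pair_nondeg HC) => y.
by rewrite (pair_addl HC) pairNl H subrr.
Qed.

Lemma rhoN x (g : A) : rho x (- g) = - rho x g.
Proof.
have [_ hs _] := anchor_vf HC x.
by rewrite -(scaleN1r g) hs scaleN1r.
Qed.
Lemma rhoM x (f g : A) : rho x (f * g) = rho x f * g + f * rho x g.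
Proof. by have [_ _ hm] := anchor_vf HC x; rewrite hm. Qed.

Lemma DN g : D (- g) = - D g.
Proof.
apply: pair_ext => y; by rewrite pairNl !(D_def HC) rhoN scalerN.
Qed.
Lemma DM f g : D (f * g) = f *: D g + g *: D f.
Proof.
apply: pair_ext => y.
rewrite (pair_addl HC) !(pair_scalel HC) !(D_def HC) rhoM scalerDr.
by rewrite -!scalerAr addrC (mulrC g).
Qed.

Lemma rsN1 (x : V) : rscale (-1) x = - x.
Proof. by rewrite /rscale scaleN1r scaleN1r. Qed.
Lemma dorfNl x y : dorf (- x) y = - dorf x y.
Proof. by rewrite -rsN1 (dorf_scalel HC) rsN1. Qed.
Lemma dorfNr x y : dorf x (- y) = - dorf x y.
Proof. by rewrite -rsN1 (dorf_scaler HC) rsN1. Qed.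
Lemma dorfBl x x' y : dorf (x - x') y = dorf x y - dorf x' y.
Proof. by rewrite (dorf_addl HC) dorfNl. Qed.
Lemma dorfBr x y y' : dorf x (y - y') = dorf x y - dorf x y'.
Proof. by rewrite (dorf_addr HC) dorfNr. Qed.
Lemma dorf_swap x y : dorf x y = D (pair x y) + D (pair x y) - dorf y x.
Proof. by rewrite -scale2 -(dorf_sym HC) addrK. Qed.

Lemma dorf_scale_l (f : A) a b :
  dorf (f *: a) b = f *: dorf a b - rho b f *: a + (pair a b *: D f + pair a b *: D f).
Proof.
rewrite dorf_swap (dorf_leibniz HC) (pair_scalel HC) DM (dorf_swap b a) (psym b a).
rewrite scalerBr scalerDr.
zmod_eq.
Qed.

Definition S X Y := dorf (J Y) (I X) - J (dorf Y (I X)) - I (dorf (J Y) X) + J (I (dorf Y X)).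
Definition Q v := rscale (- 2^-1) (K v).

Lemma nablaE X Y : nablaIJ dorf I J K X Y = Q (S X Y).
Proof. by []. Qed.

Ltac expand := rewrite ?(endoD HI, endoD HJ, endoD HK, endoN HI, endoN HJ, endoN HK,
   endoZ HI, endoZ HJ, endoZ HK, dorf_addl HC, dorf_addr HC, dorfNl, dorfNr,
   dorf_leibniz HC, dorf_scale_l, scalerDr, scalerN, scaleNr, opprK).

Lemma QD u v : Q (u + v) = Q u + Q v.
Proof. by rewrite /Q (endoD HK) rsD. Qed.
Lemma QN u : Q (- u) = - Q u.
Proof. by rewrite /Q (endoN HK) rsN. Qed.
Lemma QZ f u : Q (f *: u) = f *: Q u.
Proof. by rewrite /Q (endoZ HK) rsZ. Qed.
Lemma Q2 u : Q (u + u) = - K u.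
Proof. by rewrite /Q (endoD HK) mhalf2. Qed.

Lemma S_addX X X' Y : S (X + X') Y = S X Y + S X' Y.
Proof. rewrite /S; expand; zmod_eq. Qed.
Lemma S_addY X Y Y' : S X (Y + Y') = S X Y + S X Y'.
Proof. rewrite /S; expand; zmod_eq. Qed.
Lemma S_scaleX f X Y : S (f *: X) Y = f *: S X Y.
Proof. rewrite /S; expand; zmod_eq. Qed.

Lemma pI x y : pair (I x) (I y) = pair x y. Proof. exact: (ahc_orthI Hhc x y). Qed.
Lemma pJ x y : pair (J x) (J y) = pair x y. Proof. exact: (ahc_orthJ Hhc x y). Qed.
Lemma pK x y : pair (K x) (K y) = pair x y. Proof. exact: (ahc_orthK Hhc x y). Qed.
Lemma p_JY_IX X Y : pair (J Y) (I X) = pair (K X) Y.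
Proof. by rewrite -pI IJ I2 pairNr -pK K2 pairNl opprK psym. Qed.
Lemma p_Y_IX X Y : pair Y (I X) = pair (I X) Y.
Proof. exact: psym. Qed.
Lemma p_JY_X X Y : pair (J Y) X = - pair (J X) Y.
Proof. by rewrite -pJ J2 pairNl psym. Qed.
Lemma S_scaleY f X Y : S X (f *: Y) = f *: S X Y
  + (rho X f *: K Y + rho X f *: K Y)
  + (let w := pair (K X) Y *: D f - pair (I X) Y *: J (D f) + pair (J X) Y *: I (D f)
              - pair X Y *: K (D f) in w + w).
Proof.
rewrite /S; expand.
rewrite !IJ !JI p_JY_IX p_Y_IX p_JY_X (psym Y X); expand; zmod_eq.
Qed.

Lemma conn : hypercomplex_connection pair rho D I J K (nablaIJ dorf I J K).
Proof.
split.
- by move=> X X' Y; rewrite !nablaE S_addX QD.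
- by move=> X Y Y'; rewrite !nablaE S_addY QD.
- by move=> f X Y; rewrite !nablaE S_scaleX QZ.
- move=> f X Y; rewrite !nablaE S_scaleY /= QD QD QZ !Q2 /hc_Delta.
  expand; rewrite ?K2 ?KJ ?KI; expand; zmod_eq.
Qed.

Lemma S_JY X Y : S X (J Y) = - J (S X Y).
Proof. rewrite /S; expand; rewrite ?J2; expand; zmod_eq. Qed.

Lemma covJ X Y : nablaIJ dorf I J K X (J Y) = J (nablaIJ dorf I J K X Y).
Proof. by rewrite !nablaE S_JY /Q (endoN HK) KJ opprK (endoR HJ) JK. Qed.

Definition T X Y := dorf (I Y) (J X) - I (dorf Y (J X)) - J (dorf (I Y) X) + I (J (dorf Y X)).

Hypothesis HN : forall X Y, nijenhuis dorf I J X Y = 0.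

Lemma ST X Y : S X Y = - T X Y.
Proof.
apply/eqP; rewrite -addr_eq0; apply/eqP; rewrite -(HN Y X) /nijenhuis /S /T; zmod_eq.
Qed.

Lemma T_IY X Y : T X (I Y) = - I (T X Y).
Proof. rewrite /T; expand; rewrite ?I2; expand; zmod_eq. Qed.

Lemma covI X Y : nablaIJ dorf I J K X (I Y) = I (nablaIJ dorf I J K X Y).
Proof.
rewrite !nablaE !ST T_IY opprK /Q (endoN HK) KI (endoR HI) (endoN HI) IK opprK.
by [].
Qed.

Lemma covK X Y : nablaIJ dorf I J K X (K Y) = K (nablaIJ dorf I J K X Y).
Proof. by rewrite -IJ covI covJ IJ. Qed.

Lemma SS X Y : S X Y - S Y X =
  let d1 := D (pair (J Y) (I X)) in let d2 := D (pair Y (I X)) in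
  let d3 := D (pair (J Y) X) in let d4 := D (pair Y X) in
  (d1 + d1) - J (d2 + d2) - I (d3 + d3) - K (d4 + d4)
  + (K (dorf X Y) + K (dorf X Y)).
Proof.
have h := HN X Y; rewrite /nijenhuis in h.
rewrite /= -[LHS]addr0 -h /S (dorf_swap (J Y) (I X)) (dorf_swap Y (I X)) (dorf_swap (J Y) X)
  (dorf_swap Y X); expand; rewrite ?IJ ?JI; expand; zmod_eq.
Qed.

Lemma half_sub (z d : V) : rscale (2^-1) (z - (d + d - z)) = z - d.
Proof.
by rewrite (_ : z - (d + d - z) = (z + z) - (d + d)); [rewrite rsB !half2 | zmod_eq].
Qed.

Lemma QJ2 u : Q (J (u + u)) = I u.
Proof. by rewrite /Q KJ rsN (endoD HI) mhalf2 opprK. Qed.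
Lemma QI2 u : Q (I (u + u)) = - J u.
Proof. by rewrite /Q KI (endoD HJ) mhalf2. Qed.
Lemma QK2 u : Q (K (u + u)) = u.
Proof. by rewrite /Q K2 rsN mhalf2 opprK. Qed.

Lemma torsionE X Y : torsion dorf (nablaIJ dorf I J K) X Y =
  I (D (pair X (I Y))) + J (D (pair X (J Y))) + K (D (pair X (K Y))).
Proof.
rewrite /torsion !nablaE /courant_bracket (dorf_swap Y X) half_sub.
rewrite -QN -QD SS /=.
rewrite QD QD QD QD !QN !Q2 QJ2 QI2 QK2 K2 opprK.
rewrite p_JY_IX p_Y_IX (psym (J Y) X) (psym Y X).
have e1 : pair (K X) Y = - pair X (K Y) by rewrite -pK K2 pairNl.
have e2 : pair (I X) Y = - pair X (I Y) by rewrite -pI I2 pairNl.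
rewrite e1 e2 !DN; expand; zmod_eq.
Qed.

End Pf.

Theorem mainTheorem5 (R : realFieldType) (A : comAlgType R) (V : lmodType A)
  (pair : V -> V -> A) (rho : V -> A -> A) (dorf : V -> V -> V) (D : A -> V)
  (I J K : V -> V)
  (HC : courant_algebroid pair rho dorf D)
  (Hhc : almost_hypercomplex pair I J K)
  (HN : forall X Y, nijenhuis dorf I J X Y = 0) :
  let nabla := nablaIJ dorf I J K in
  [/\ hypercomplex_connection pair rho D I J K nabla,
      (forall X Y, cov_deriv nabla I X Y = 0),
      (forall X Y, cov_deriv nabla J X Y = 0),
      (forall X Y, cov_deriv nabla K X Y = 0) &
      (forall X Y, torsion dorf nabla X Y =
          I (D (pair X (I Y))) + J (D (pair X (J Y))) + K (D (pair X (K Y))))].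
Proof.
move=> nabla; split.
- exact: (conn HC Hhc).
- by move=> X Y; rewrite /cov_deriv /nabla (covI HC Hhc HN) subrr.
- by move=> X Y; rewrite /cov_deriv /nabla (covJ HC Hhc) subrr.
- by move=> X Y; rewrite /cov_deriv /nabla (covK HC Hhc HN) subrr.
- by move=> X Y; rewrite /nabla (torsionE HC Hhc HN).
Qed.
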